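(* Let $\mathcal{A}$ be the augmented free tridendriform algebra on reduced planar trees, and let $\Delta:\mathcal{A}\to\mathcal{A}\otimes\mathcal{A}$ be the map such that $\Delta(|)=|\otimes|$ and whose restriction to $\mathcal{A}^+$ is the unique tridendriform algebra morphism $\mathcal{A}^+\to\mathcal{A}\overline{\otimes}\mathcal{A}$ with $\Delta(Y)=Y\otimes|+|\otimes Y$. For $x\in\mathcal A^+$ put $\tilde\Delta(x)=\Delta(x)-|\otimes x-x\otimes|$. Then for all $t,s\in\mathcal{A}^+$: $$\tilde\Delta(t\cdot s)=\tilde\Delta(t)\cdot\tilde\Delta(s)+(|\otimes t)\cdot\tilde\Delta(s)+\tilde\Delta(t)\cdot(|\otimes s),$$ $$\tilde\Delta(t\prec s)=s\otimes t+(|\otimes t)\prec\tilde\Delta(s)+\tilde\Delta(t)\prec(|\otimes s)+\tilde\Delta(t)*(s\otimes|)+\tilde\Delta(t)\prec\tilde\Delta(s),$$ $$\tilde\Delta(t\succ s)=t\otimes s+(|\otimes t)\succ\tilde\Delta(s)+(t\otimes|)*\tilde\Delta(s)+\tilde\Delta(t)\succ(|\otimes s)+\tilde\Delta(t)\succ\tilde\Delta(s),$$ where the products $\prec,\cdot,\succ$ of tensors are those of $\mathcal{A}\overline{\otimes}\mathcal{A}$ and $(a\otimes b)*(c\otimes d)=(a*c)\otimes(b*d)$.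
   Context: A tridendriform algebra over a field $\mathbb{K}$ is a vector space with products $\prec,\cdot,\succ$ such that, with $a*b=a\prec b+a\cdot b+a\succ b$: $(a\prec b)\prec c=a\prec(b*c)$, $(a\succ b)\prec c=a\succ(b\prec c)$, $(a*b)\succ c=a\succ(b\succ c)$, $(a\succ b)\cdot c=a\succ(b\cdot c)$, $(a\prec b)\cdot c=a\cdot(b\succ c)$, $(a\cdot b)\prec c=a\cdot(b\prec c)$, $(a\cdot b)\cdot c=a\cdot(b\cdot c)$. Trees: planar rooted trees in which every internal vertex has at least two children; the root vertex hangs from a trunk edge; leaves are the edges without upper vertex. $|$ is the tree with no internal vertex (one leaf). $T_n$ is the set of such trees with $n+1$ leaves, $\mathcal{A}=\bigoplus_{n\ge0}\mathbb{K}T_n$, $\mathcal{A}^+=\bigoplus_{n\ge1}\mathbb{K}T_n$. For trees $x_0,\dots,x_k$ ($k\ge1$), $x_0\vee\cdots\vee x_k$ is obtained by grafting them from left to right on a new root vertex; every tree $x\neq|$ is uniquely $x=x^{(0)}\vee\cdots\vee x^{(k)}$. $Y=|\vee|$. For trees $x=x^{(0)}\vee\cdots\vee x^{(k)}$, $y=y^{(0)}\vee\cdots\vee y^{(l)}$ in $\mathcal A^+$, recursively on the number of leaves: $x\prec y=x^{(0)}\vee\cdots\vee x^{(k-1)}\vee(x^{(k)}*y)$, $x\cdot y=x^{(0)}\vee\cdots\vee x^{(k-1)}\vee(x^{(k)}*y^{(0)})\vee y^{(1)}\vee\cdots\vee y^{(l)}$, $x\succ y=(x*y^{(0)})\vee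 y^{(1)}\vee\cdots\vee y^{(l)}$, where $*=\prec+\cdot+\succ$ and $|*z=z*|=z$. Then $\mathcal{A}^+$ is the free tridendriform algebra generated by $Y$ (Loday–Ronco), and $\mathcal A=\mathbb K|\oplus\mathcal A^+$ is its augmentation: $|$ is the unit of $*$ and for $a\in\mathcal A^+$: $|\prec a=0$, $a\prec|=a$, $|\succ a=a$, $a\succ|=0$, $|\cdot a=a\cdot|=0$. $\mathcal A\overline{\otimes}\mathcal A:=(\mathcal A^+\otimes\mathcal A^+)\oplus(\mathbb K|\otimes\mathcal A^+)\oplus(\mathcal A^+\otimes\mathbb K|)$, with products for $\ltimes\in\{\prec,\cdot,\succ\}$: $(a\otimes|)\ltimes(c\otimes|)=(a\ltimes c)\otimes|$ for $a,c\in\mathcal A^+$, and $(a\otimes b)\ltimes(c\otimes d)=(a*c)\otimes(b\ltimes d)$ when $b,d$ are not both $|$ (augmented conventions); it is a tridendriform algebra. *)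

(* Defs.v *)
(* Planar reduced trees, the free tridendriform algebra on them,
   and the tensor square A (x)bar A, modelled concretely:
   an element of K T (T = trees, or pairs of trees) is represented by a finite
   list of (coefficient, basis element); two representations denote the same
   vector iff all coefficients agree ([veq]). *)
From HB Require Import structures.
From mathcomp Require Import all_boot all_algebra.
Set Implicit Arguments. Unset Strict Implicit. Unset Printing Implicit Defensive.
Import GRing.Theory.
Local Open Scope ring_scope.

(* Planar rooted trees: a vertex with its ordered list of children.
   [Node [::]] is the tree | (no internal vertex); [Node [:: x0; ..; xk]] is
   x0 \/ ... \/ xk. *)
Inductive tree := Node of seq tree.

Definition leaf : tree := Node [::].
Definition Ytree : tree := Node [:: leaf; leaf].

Definition is_leaf (x : tree) : bool := if x is Node [::] then true else false.

Fixpoint tree_eqb (x y : tree) {struct x} : bool :=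
  let: Node xs := x in let: Node ys := y in
  (fix aux (xs ys : seq tree) {struct xs} : bool :=
     match xs, ys with
     | [::], [::] => true
     | x1 :: xs1, y1 :: ys1 => tree_eqb x1 y1 && aux xs1 ys1
     | _, _ => false
     end) xs ys.

Lemma tree_eqP : Equality.axiom tree_eqb.
Proof.
rewrite /Equality.axiom.
fix IH 1 => -[xs] [ys] /=.
elim: xs ys => [|x xs IHs] [|y ys] /=; try by constructor.
case: (IH x y) => [<-|nxy]; last by constructor => -[].
case: (IHs ys) => [[<-]|nxs]; first by constructor.
by constructor => -[E]; apply: nxs; rewrite E.
Qed.

HB.instance Definition _ := hasDecEq.Build tree tree_eqP.

Fixpoint valid (x : tree) : bool :=
  let: Node cs := x in (size cs != 1%N) && all valid cs.

Fixpoint tsize (x : tree) : nat :=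
  let: Node cs := x in (sumn (map tsize cs)).+1.

Section Alg.
Variable K : fieldType.

Definition lin (T : Type) := seq (K * T).

Definition coef (T : eqType) (v : lin T) (u : T) : K :=
  \sum_(p <- v | p.2 == u) p.1.
Definition veq (T : eqType) (v w : lin T) : Prop := forall u, coef v u = coef w u.

Definition lscale (T : Type) (c : K) (v : lin T) : lin T :=
  [seq (c * p.1, p.2) | p <- v].
Definition lsub (T : Type) (v w : lin T) : lin T := v ++ lscale (-1) w.

Definition bilin (A B C : Type) (f : A -> B -> lin C) (v : lin A) (w : lin B) : lin C :=
  flatten [seq lscale (p.1 * q.1) (f p.2 q.2) | p <- v, q <- w].

Definition tens (v w : lin tree) : lin (tree * tree) :=
  [seq (p.1 * q.1, (p.2, q.2)) | p <- v, q <- w].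

Definition graft (L : seq tree) (v : lin tree) (R : seq tree) : lin tree :=
  [seq (p.1, Node (L ++ p.2 :: R)) | p <- v].

(* (x prec y, x . y, x succ y) for x, y <> |, defined recursively (fuel n
   bounding the recursion depth); the star products of subtrees use the
   unit convention | * z = z * | = z. *)
Fixpoint tri (n : nat) (x y : tree) {struct n} : lin tree * lin tree * lin tree :=
  match n with
  | 0%N => ([::], [::], [::])
  | n'.+1 =>
    let st (a b : tree) : lin tree :=
      if is_leaf a then [:: (1, b)] else if is_leaf b then [:: (1, a)] else
      let: (p, q, r) := tri n' a b in p ++ q ++ r in
    match x, y with
    | Node (x0 :: xs), Node (y0 :: ys) =>
      let xl := belast x0 xs in
      let xk := last x0 xs in
      (graft xl (st xk y) [::], graft xl (st xk y0) ys, graft [::] (st x y0) ys)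
    | _, _ => ([::], [::], [::])
    end
  end.

(* the products on basis trees of A^+ (fuel = total size, which suffices) *)
Definition tprec (x y : tree) : lin tree := (tri (tsize x + tsize y) x y).1.1.
Definition tdot (x y : tree) : lin tree := (tri (tsize x + tsize y) x y).1.2.
Definition tsucc (x y : tree) : lin tree := (tri (tsize x + tsize y) x y).2.

(* augmented products on A (the value on (|,|) is irrelevant and set to 0) *)
Definition tstar (x y : tree) : lin tree :=
  if is_leaf x then [:: (1, y)] else if is_leaf y then [:: (1, x)]
  else tprec x y ++ tdot x y ++ tsucc x y.
Definition aprec (x y : tree) : lin tree :=
  if is_leaf y then (if is_leaf x then [::] else [:: (1, x)])
  else if is_leaf x then [::] else tprec x y.
Definition adot (x y : tree) : lin tree :=
  if is_leaf x || is_leaf y then [::] else tdot x y.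
Definition asucc (x y : tree) : lin tree :=
  if is_leaf x then (if is_leaf y then [::] else [:: (1, y)])
  else if is_leaf y then [::] else tsucc x y.

Definition vprec := bilin tprec.
Definition vdot := bilin tdot.
Definition vsucc := bilin tsucc.

(* products of A (x)bar A on basis tensors a(x)b, c(x)d, for op in {prec,.,succ}:
   (a(x)|) op (c(x)|) = (a op c)(x)| ;  otherwise (a*c)(x)(b op d). *)
Definition tens_op (op : tree -> tree -> lin tree) (u v : tree * tree)
  : lin (tree * tree) :=
  if is_leaf u.2 && is_leaf v.2 then [seq (p.1, (p.2, leaf)) | p <- op u.1 v.1]
  else tens (tstar u.1 v.1) (op u.2 v.2).

Definition TTprec := bilin (tens_op aprec).
Definition TTdot := bilin (tens_op adot).
Definition TTsucc := bilin (tens_op asucc).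
Definition TTstar := bilin (fun u v : tree * tree => tens (tstar u.1 v.1) (tstar u.2 v.2)).

Definition inAplus (v : lin tree) : bool := all (fun p => valid p.2 && ~~ is_leaf p.2) v.

Definition Dext (D : tree -> lin (tree * tree)) (v : lin tree) : lin (tree * tree) :=
  flatten [seq lscale p.1 (D p.2) | p <- v].

Definition is_Delta (D : tree -> lin (tree * tree)) : Prop :=
  [/\ veq (D leaf) [:: (1, (leaf, leaf))],
      veq (D Ytree) [:: (1, (Ytree, leaf)); (1, (leaf, Ytree))],
      (forall t, valid t -> ~~ is_leaf t -> forall a b, coef (D t) (a, b) != 0 ->
          [&& valid a, valid b & ~~ (is_leaf a && is_leaf b)]) &
      (forall v w, inAplus v -> inAplus w ->
          [/\ veq (Dext D (vprec v w)) (TTprec (Dext D v) (Dext D w)),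
              veq (Dext D (vdot v w)) (TTdot (Dext D v) (Dext D w)) &
              veq (Dext D (vsucc v w)) (TTsucc (Dext D v) (Dext D w))])].

Definition lone (v : lin tree) : lin (tree * tree) := [seq (p.1, (leaf, p.2)) | p <- v].
Definition rone (v : lin tree) : lin (tree * tree) := [seq (p.1, (p.2, leaf)) | p <- v].

Definition Dtilde (D : tree -> lin (tree * tree)) (v : lin tree) : lin (tree * tree) :=
  lsub (lsub (Dext D v) (lone v)) (rone v).

End Alg.

(* Main.v *)
Require Import Defs.
From mathcomp Require Import all_boot all_algebra.
From mathcomp Require Import zify ring.
Set Implicit Arguments. Unset Strict Implicit. Unset Printing Implicit Defensive.
Import GRing.Theory.
Local Open Scope ring_scope.

Definition ev {K : fieldType} {T : Type} (F : T -> K) (v : lin K T) : K :=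
  \sum_(p <- v) p.1 * F p.2.

Lemma ev_nil {K : fieldType} {T : Type} (F : T -> K) : ev F [::] = 0.
Proof. by rewrite /ev big_nil. Qed.

Lemma ev_cons {K : fieldType} {T : Type} (F : T -> K) p v :
  ev F (p :: v) = p.1 * F p.2 + ev F v.
Proof. by rewrite /ev big_cons. Qed.

Lemma ev_cat {K : fieldType} {T : Type} (F : T -> K) v w :
  ev F (v ++ w) = ev F v + ev F w.
Proof. by rewrite /ev big_cat. Qed.

Lemma ev_lscale {K : fieldType} {T : Type} (F : T -> K) c v :
  ev F (lscale c v) = c * ev F v.
Proof.
elim: v => [|p v IH]; first by rewrite /lscale /= !ev_nil mulr0.
by rewrite /= ev_cons IH ev_cons /= mulrDr mulrA.
Qed.

Lemma ev_lsub {K : fieldType} {T : Type} (F : T -> K) v w :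
  ev F (lsub v w) = ev F v - ev F w.
Proof. by rewrite /lsub ev_cat ev_lscale mulN1r. Qed.

Lemma ev_map {K : fieldType} {T U : Type} (F : U -> K) (f : T -> U) (v : lin K T) :
  ev F [seq (p.1, f p.2) | p <- v] = ev (fun x => F (f x)) v.
Proof. by elim: v => [|p v IH]; rewrite /= ?ev_nil // !ev_cons IH. Qed.

Lemma ev_flatten {K : fieldType} {T : Type} (F : T -> K) (s : seq (lin K T)) :
  ev F (flatten s) = \sum_(v <- s) ev F v.
Proof. by elim: s => [|v s IH]; rewrite /= ?ev_nil ?big_nil // ev_cat IH big_cons. Qed.

Lemma ev_add {K : fieldType} {T : Type} (F G : T -> K) v :
  ev (fun x => F x + G x) v = ev F v + ev G v.
Proof. by rewrite /ev -big_split; apply: eq_bigr => p _; rewrite mulrDr. Qed.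

Lemma ev_sub {K : fieldType} {T : Type} (F G : T -> K) v :
  ev (fun x => F x - G x) v = ev F v - ev G v.
Proof. by rewrite /ev -sumrB; apply: eq_bigr => p _; rewrite mulrBr. Qed.

Lemma ev0 {K : fieldType} {T : Type} (v : lin K T) : ev (fun _ => 0) v = 0.
Proof. by rewrite /ev big1 // => p _; rewrite mulr0. Qed.

Lemma ev_ext {K : fieldType} {T : Type} (F G : T -> K) v :
  (forall x, F x = G x) -> ev F v = ev G v.
Proof. by move=> E; rewrite /ev; apply: eq_bigr => p _; rewrite E. Qed.

Lemma ev_all {K : fieldType} {T : Type} (P : pred T) (F G : T -> K) v :
  all (fun p => P p.2) v -> (forall x, P x -> F x = G x) -> ev F v = ev G v.
Proof.
move=> H E; elim: v H => [|p v IH] /=; first by rewrite !ev_nil.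
by move=> /andP[h1 h2]; rewrite !ev_cons E // IH.
Qed.

Lemma ev_bilin {K : fieldType} {A B C : Type} (F : C -> K) (f : A -> B -> lin K C) v w :
  ev F (bilin f v w) = ev (fun a => ev (fun b => ev F (f a b)) w) v.
Proof.
rewrite /bilin ev_flatten big_allpairs_dep; apply: eq_bigr => p _.
rewrite /ev mulr_sumr; apply: eq_bigr => q _; rewrite -/(ev _ _) ev_lscale.
by rewrite mulrA.
Qed.

Lemma ev_tens {K : fieldType} (F : tree * tree -> K) v w :
  ev F (tens v w) = ev (fun a => ev (fun b => F (a, b)) w) v.
Proof.
rewrite /tens /ev big_allpairs_dep; apply: eq_bigr => p _.
by rewrite mulr_sumr; apply: eq_bigr => q _ /=; rewrite mulrA.
Qed.

Lemma ev_exch {K : fieldType} {A B : Type} (F : A -> B -> K) v w :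
  ev (fun a => ev (fun b => F a b) w) v = ev (fun b => ev (fun a => F a b) v) w.
Proof.
rewrite /ev; under eq_bigr do rewrite mulr_sumr.
rewrite exchange_big /=; apply: eq_bigr => q _; rewrite mulr_sumr; apply: eq_bigr => p _.
by rewrite !mulrA [q.1 * _]mulrC.
Qed.

Lemma ev_Dext {K : fieldType} (D : tree -> lin K (tree * tree)) F v :
  ev F (Dext D v) = ev (fun a => ev F (D a)) v.
Proof.
rewrite /Dext ev_flatten big_map; apply: eq_bigr => p _; by rewrite ev_lscale.
Qed.

Lemma coef_cons {K : fieldType} {T : eqType} (p : K * T) v a :
  coef (p :: v) a = (if p.2 == a then p.1 else 0) + coef v a.
Proof. by rewrite /coef big_cons; case: (p.2 == a); rewrite ?add0r. Qed.

Lemma ev_S {K : fieldType} {T : eqType} (F : T -> K) (v : lin K T) (S : seq T) :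
  uniq S -> {subset map snd v <= S} -> ev F v = \sum_(a <- S) coef v a * F a.
Proof.
move=> uS; elim: v => [|p v IH] sub.
  by rewrite ev_nil big1 // => a _; rewrite /coef big_nil mul0r.
rewrite ev_cons IH; last by move=> x hx; apply: sub; rewrite /= inE hx orbT.
have pS : p.2 \in S by apply: sub; rewrite /= inE eqxx.
under [RHS]eq_bigr do rewrite coef_cons mulrDl.
rewrite big_split /=; congr (_ + _).
rewrite (bigID (pred1 p.2)) /= [X in _ + X]big1; last first.
  by move=> a; rewrite eq_sym => /negbTE ->; rewrite mul0r.
rewrite addr0 -big_filter filter_pred1_uniq // big_cons big_nil addr0 eqxx.
by [].

Qed.

Lemma ev_coef {K : fieldType} {T : eqType} (F : T -> K) (v : lin K T) :
  ev F v = \sum_(a <- undup (map snd v)) coef v a * F a.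
Proof. by apply: ev_S; [apply: undup_uniq | move=> x; rewrite mem_undup]. Qed.

Lemma veq_ev {K : fieldType} {T : eqType} (F : T -> K) (v w : lin K T) :
  veq v w -> ev F v = ev F w.
Proof.
move=> E; set S := undup (map snd (v ++ w)).
have uS : uniq S by apply: undup_uniq.
rewrite (ev_S F uS) ?(ev_S F uS (v := w)); first by apply: eq_bigr => a _; rewrite E.
  by move=> x hx; rewrite mem_undup map_cat mem_cat hx orbT.
by move=> x hx; rewrite mem_undup map_cat mem_cat hx.
Qed.

Lemma ev_veq {K : fieldType} {T : eqType} (v w : lin K T) :
  (forall F : T -> K, ev F v = ev F w) -> veq v w.
Proof.
move=> E u; have cE : forall z : lin K T, coef z u = ev (fun x => (x == u)%:R) z.
  move=> z; rewrite /coef /ev big_mkcond; apply: eq_bigr => p _.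
  by case: (p.2 == u); rewrite ?mulr1 ?mulr0.
by rewrite !cE E.
Qed.

Lemma ev_supp {K : fieldType} {T : eqType} (F G : T -> K) (v : lin K T) :
  (forall u, coef v u != 0 -> F u = G u) -> ev F v = ev G v.
Proof.
move=> E; rewrite !ev_coef; apply: eq_bigr => a _.
by case: (eqVneq (coef v a) 0) => [->|/E ->]; rewrite ?mul0r.
Qed.


Definition nlp {K : fieldType} (p : K * tree) := ~~ is_leaf p.2.

Lemma graft_nl {K : fieldType} L (v : lin K tree) R : all nlp (graft L v R).
Proof. by elim: v => //= p v ->; case: L. Qed.

Lemma tri_nl {K : fieldType} n x y :
  [/\ all nlp (@tri K n x y).1.1, all nlp (@tri K n x y).1.2 & all nlp (@tri K n x y).2].
Proof.
case: n => [|n] //=; case: x => [[|x0 xs]] //; case: y => [[|y0 ys]] //=.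
by rewrite !graft_nl.
Qed.

Lemma tstar_nl {K : fieldType} a c :
  ~~ (is_leaf a && is_leaf c) -> all nlp (@tstar K a c).
Proof.
rewrite /tstar; case: (boolP (is_leaf a)) => ha /=; first by rewrite andbT /nlp => ->.
case: (boolP (is_leaf c)) => hc /=; first by rewrite /nlp ha.
rewrite /tprec /tdot /tsucc !all_cat.
by case: (@tri_nl K (Defs.tsize a + Defs.tsize c) a c) => -> -> ->.
Qed.

Lemma aprec_nl {K : fieldType} b d : ~~ (is_leaf b && is_leaf d) -> all nlp (@aprec K b d).
Proof.
rewrite /aprec; case hd: (is_leaf d); case hb: (is_leaf b) => //= _.
- by rewrite /nlp hb.
- by rewrite /tprec; case: (@tri_nl K (Defs.tsize b + Defs.tsize d) b d).
Qed.
Lemma adot_nl {K : fieldType} b d : all nlp (@adot K b d).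
Proof. by rewrite /adot; case: (_ || _) => //; rewrite /tdot; case: (@tri_nl K (Defs.tsize b + Defs.tsize d) b d). Qed.
Lemma asucc_nl {K : fieldType} b d : ~~ (is_leaf b && is_leaf d) -> all nlp (@asucc K b d).
Proof.
rewrite /asucc; case hb: (is_leaf b); case hd: (is_leaf d) => //= _.
- by rewrite /nlp hd.
- by rewrite /tsucc; case: (@tri_nl K (Defs.tsize b + Defs.tsize d) b d).
Qed.

Lemma tsizeS (x : tree) : Defs.tsize x = (Defs.tsize x).-1.+1.
Proof. by case: x. Qed.

Lemma tri_unf {K : fieldType} x y :
  @tri K (Defs.tsize x + Defs.tsize y) x y = @tri K (Defs.tsize x + Defs.tsize y).-1.+1 x y.
Proof. by rewrite [Defs.tsize x]tsizeS addSn. Qed.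

Lemma tprec_Y {K : fieldType} x : ~~ is_leaf x -> @tprec K Ytree x = [:: (1, Node [:: leaf; x])].
Proof. by rewrite /tprec tri_unf; case: x => [[|y0 ys]]. Qed.

Lemma tsucc_Y {K : fieldType} x : ~~ is_leaf x -> @tsucc K x Ytree = [:: (1, Node [:: x; leaf])].
Proof. by rewrite /tsucc tri_unf; case: x => [[|y0 ys]] //= _. Qed.

Lemma tprec_2 {K : fieldType} x y : ~~ is_leaf y ->
  @tprec K (Node [:: x; leaf]) y = [:: (1, Node [:: x; y])].
Proof. by rewrite /tprec tri_unf; case: y => [[|y0 ys]]. Qed.

Lemma tdot_k {K : fieldType} x0 xs z :
  @tdot K (Node (x0 :: xs)) (Node [:: leaf; z]) = [:: (1, Node (rcons (x0 :: xs) z))].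
Proof.
rewrite /tdot tri_unf /=.
have -> : (if is_leaf (last x0 xs) then [:: (1 : K, leaf)] else [:: (1, last x0 xs)])
   = [:: (1, last x0 xs)] by case: (last x0 xs) => [[|]].
by rewrite /graft /= -cat_rcons -lastI cats1.
Qed.



Definition PL {K : fieldType} (g : tree -> K) (u : tree * tree) : K :=
  if is_leaf u.1 then (if is_leaf u.2 then 0 else g u.2) else 0.
Definition PR {K : fieldType} (g : tree -> K) (u : tree * tree) : K :=
  if is_leaf u.2 then (if is_leaf u.1 then 0 else g u.1) else 0.

Lemma leafE (x : tree) : is_leaf x -> x = leaf.
Proof. by case: x => [[|]]. Qed.

Lemma ev_nl0 {K : fieldType} (F : tree -> K) v :
  all nlp v -> (forall x, ~~ is_leaf x -> F x = 0) -> ev F v = 0.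
Proof. move=> h E; rewrite (ev_all (P := fun x => ~~ is_leaf x) (G := fun _ => 0)) //; exact: ev0. Qed.


Lemma pw_PL {K : fieldType} (op top : tree -> tree -> lin K tree)
  (h1 : forall b d, ~~ is_leaf b -> ~~ is_leaf d -> op b d = top b d)
  (h2 : forall b d, ~~ (is_leaf b && is_leaf d) -> all nlp (op b d))
  (htop : forall b d, all nlp (top b d)) g u v :
  ~~ (is_leaf u.1 && is_leaf u.2) -> ~~ (is_leaf v.1 && is_leaf v.2) ->
  ev (PL g) (tens_op op u v) = PL (fun d => PL (fun b => ev g (top b d)) u) v.
Proof.
case: u => a b; case: v => c d /= hu hv; rewrite /tens_op /=.
case hb: (is_leaf b); case hd: (is_leaf d) => /=.
- rewrite (ev_map _ (fun x => (x, leaf))) ev_nl0.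
  + by rewrite /PL /= hd; case: (is_leaf c).
  + by apply: h2; rewrite hb andbT in hu; rewrite negb_and hu.
  + by move=> x /negbTE hx; rewrite /PL /= hx.
all: rewrite ev_tens; case hac: (is_leaf a && is_leaf c).
all: try (rewrite ev_nl0; [
  by rewrite /PL /=; move: hac; case: (is_leaf a); case: (is_leaf c); case: (is_leaf d) |
  by apply: tstar_nl; rewrite hac |
  by move=> x /negbTE hx; rewrite /PL /= hx ev0 ]).
all: move/andP: hac => [ha hc]; rewrite (leafE ha) (leafE hc) /tstar /= ev_cons ev_nil mul1r addr0.
all: rewrite ha hc /= in hu hv; try by rewrite ?hb ?hd in hu hv.
all: rewrite /PL /= ?hb ?hd //= h1 ?hb ?hd //.
by apply: (ev_all (P := fun x => ~~ is_leaf x) (htop b d)) => x /negbTE ->.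
Qed.

Lemma pw_PR {K : fieldType} (op top : tree -> tree -> lin K tree)
  (h1 : forall b d, ~~ is_leaf b -> ~~ is_leaf d -> op b d = top b d)
  (h2 : forall b d, ~~ (is_leaf b && is_leaf d) -> all nlp (op b d))
  (htop : forall b d, all nlp (top b d)) g u v :
  ~~ (is_leaf u.1 && is_leaf u.2) -> ~~ (is_leaf v.1 && is_leaf v.2) ->
  ev (PR g) (tens_op op u v) = PR (fun c => PR (fun a => ev g (top a c)) u) v.
Proof.
case: u => a b; case: v => c d /= hu hv; rewrite /tens_op /=.
case hbd: (is_leaf b && is_leaf d).
- move/andP: hbd => [hb hd].
  rewrite hb hd !andbT in hu hv.
  rewrite (ev_map _ (fun x => (x, leaf))) h1 //.
  rewrite /PR /= hb hd (negbTE hu) (negbTE hv).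
  by apply: (ev_all (P := fun x => ~~ is_leaf x) (htop a c)) => x /negbTE ->.
- rewrite ev_tens (ev_ext (G := fun _ => 0)) ?ev0.
  + rewrite /PR /=; move: hbd hu; case: (is_leaf d); case: (is_leaf b) => //=.
    by case: (is_leaf c).
  + move=> x; apply: ev_nl0; first by apply: h2; rewrite hbd.
    by move=> w /negbTE hw; rewrite /PR /= hw.
Qed.

Definition Cprop {K : fieldType} (D : tree -> lin K (tree * tree)) x :=
  (forall g, ev (PL g) (D x) = g x) /\ (forall g, ev (PR g) (D x) = g x).

Definition Hsupp {K : fieldType} (D : tree -> lin K (tree * tree)) :=
  forall t, valid t -> ~~ is_leaf t -> forall a b, coef (D t) (a, b) != 0 ->
          [&& valid a, valid b & ~~ (is_leaf a && is_leaf b)].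

Lemma supp_nl {K : fieldType} (D : tree -> lin K (tree * tree)) y u :
  Hsupp D -> valid y -> ~~ is_leaf y -> coef (D y) u != 0 -> ~~ (is_leaf u.1 && is_leaf u.2).
Proof. by case: u => a b hs vy ly /(hs _ vy ly) /and3P[]. Qed.

Lemma ev_bilin_ext {K : fieldType} {A B C : Type} (f : A -> B -> lin K C) v v' w w' :
  (forall F, ev F v = ev F v') -> (forall F, ev F w = ev F w') ->
  forall F, ev F (bilin f v w) = ev F (bilin f v' w').
Proof.
move=> hv hw F; rewrite !ev_bilin hv; apply: ev_ext => a; exact: hw.
Qed.

Lemma ev_Dext1 {K : fieldType} (D : tree -> lin K (tree * tree)) y F :
  ev F (Dext D [:: (1, y)]) = ev F (D y).
Proof. by rewrite ev_Dext ev_cons ev_nil mul1r addr0. Qed.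

Lemma C_step {K : fieldType} (D : tree -> lin K (tree * tree)) (op top : tree -> tree -> lin K tree)
  (hs : Hsupp D)
  (h1 : forall b d, ~~ is_leaf b -> ~~ is_leaf d -> op b d = top b d)
  (h2 : forall b d, ~~ (is_leaf b && is_leaf d) -> all nlp (op b d))
  (htop : forall b d, all nlp (top b d))
  (hmor : forall v w, inAplus v -> inAplus w ->
     veq (Dext D (bilin top v w)) (bilin (tens_op op) (Dext D v) (Dext D w)))
  y z x : valid y -> ~~ is_leaf y -> valid z -> ~~ is_leaf z ->
  top y z = [:: (1, x)] -> Cprop D y -> Cprop D z -> Cprop D x.
Proof.
move=> vy ly vz lz hx [Cy1 Cy2] [Cz1 Cz2].
have E : forall F, ev F (D x) = ev F (bilin (tens_op op) (D y) (D z)).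
  move=> F; transitivity (ev F (Dext D (bilin top [:: (1, y)] [:: (1, z)]))).
    by rewrite ev_Dext ev_bilin !ev_cons !ev_nil hx !ev_cons !ev_nil !mul1r !addr0.
  rewrite (veq_ev _ (hmor _ _ _ _)); last 2 first.
  - by rewrite /inAplus /= vy ly.
  - by rewrite /inAplus /= vz lz.
  by apply: ev_bilin_ext => G; apply: ev_Dext1.
split=> g; rewrite E ev_bilin.
- transitivity (ev (fun u => PL (fun b => ev g (top b z)) u) (D y)).
    apply: ev_supp => u hu; have nu := supp_nl hs vy ly hu.
    rewrite -(Cz1 (fun d => PL (fun b => ev g (top b d)) u)); apply: ev_supp => v hv; have nv := supp_nl hs vz lz hv.
    exact: pw_PL.
  by rewrite Cy1 hx ev_cons ev_nil mul1r addr0.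
- transitivity (ev (fun u => PR (fun a => ev g (top a z)) u) (D y)).
    apply: ev_supp => u hu; have nu := supp_nl hs vy ly hu.
    rewrite -(Cz2 (fun c => PR (fun a => ev g (top a c)) u)); apply: ev_supp => v hv; have nv := supp_nl hs vz lz hv.
    exact: pw_PR.
  by rewrite Cy2 hx ev_cons ev_nil mul1r addr0.
Qed.

Lemma validE cs : valid (Node cs) = (size cs != 1%N) && all valid cs.
Proof. by []. Qed.
Lemma tsizeE cs : Defs.tsize (Node cs) = (sumn (map Defs.tsize cs)).+1.
Proof. by []. Qed.
Lemma tsize_pos x : (0 < Defs.tsize x)%N.
Proof. by case: x. Qed.
Lemma tsize_nl x : ~~ is_leaf x -> (1 < Defs.tsize x)%N.
Proof. case: x => [[|c cs]] //= _; by rewrite ltnS addn_gt0 tsize_pos. Qed.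

Lemma morP {K : fieldType} (D : tree -> lin K (tree * tree)) : is_Delta D ->
  forall v w, inAplus v -> inAplus w ->
     veq (Dext D (bilin (tprec K) v w)) (bilin (tens_op (aprec K)) (Dext D v) (Dext D w)).
Proof. by case=> _ _ _ H v w hv hw; case: (H v w hv hw). Qed.
Lemma morD {K : fieldType} (D : tree -> lin K (tree * tree)) : is_Delta D ->
  forall v w, inAplus v -> inAplus w ->
     veq (Dext D (bilin (tdot K) v w)) (bilin (tens_op (adot K)) (Dext D v) (Dext D w)).
Proof. by case=> _ _ _ H v w hv hw; case: (H v w hv hw). Qed.
Lemma morS {K : fieldType} (D : tree -> lin K (tree * tree)) : is_Delta D ->
  forall v w, inAplus v -> inAplus w ->
     veq (Dext D (bilin (tsucc K) v w)) (bilin (tens_op (asucc K)) (Dext D v) (Dext D w)).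
Proof. by case=> _ _ _ H v w hv hw; case: (H v w hv hw). Qed.

Lemma h1P {K : fieldType} b d : ~~ is_leaf b -> ~~ is_leaf d -> aprec K b d = tprec K b d.
Proof. by move=> /negbTE hb /negbTE hd; rewrite /aprec hb hd. Qed.
Lemma h1D {K : fieldType} b d : ~~ is_leaf b -> ~~ is_leaf d -> adot K b d = tdot K b d.
Proof. by move=> /negbTE hb /negbTE hd; rewrite /adot hb hd. Qed.
Lemma h1S {K : fieldType} b d : ~~ is_leaf b -> ~~ is_leaf d -> asucc K b d = tsucc K b d.
Proof. by move=> /negbTE hb /negbTE hd; rewrite /asucc hb hd. Qed.
Lemma htP {K : fieldType} b d : all nlp (tprec K b d).
Proof. by rewrite /tprec; case: (@tri_nl K (Defs.tsize b + Defs.tsize d) b d). Qed.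
Lemma htD {K : fieldType} b d : all nlp (tdot K b d).
Proof. by rewrite /tdot; case: (@tri_nl K (Defs.tsize b + Defs.tsize d) b d). Qed.
Lemma htS {K : fieldType} b d : all nlp (tsucc K b d).
Proof. by rewrite /tsucc; case: (@tri_nl K (Defs.tsize b + Defs.tsize d) b d). Qed.

Lemma CY {K : fieldType} (D : tree -> lin K (tree * tree)) : is_Delta D -> Cprop D Ytree.
Proof.
case=> _ hY _ _; split=> g; rewrite (veq_ev _ hY) !ev_cons ev_nil /PL /PR /=;
  by rewrite !mul1r !addr0 ?add0r.
Qed.

Lemma C_all {K : fieldType} (D : tree -> lin K (tree * tree)) : is_Delta D ->
  forall n x, (Defs.tsize x < n)%N -> valid x -> ~~ is_leaf x -> Cprop D x.
Proof.
move=> HD; have hs : Hsupp D by case: HD.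
elim=> [|n IH] x //.
case: x => [[|x0 [|x1 rest]]] //; rewrite tsizeE validE ltnS => hsz hv _.
case: rest hsz hv => [|r0 rs] hsz hv.
  move: hv; rewrite /= andbT => /andP[v0 v1].
  rewrite /= addn0 in hsz.
  case l0: (is_leaf x0); case l1: (is_leaf x1).
  - by rewrite (leafE l0) (leafE l1); apply: CY.
  - rewrite (leafE l0); apply: (C_step hs h1P aprec_nl htP (morP HD) (y := Ytree) (z := x1)) => //.
    + by rewrite l1.
    + by rewrite tprec_Y ?l1.
    + exact: CY.
    + by apply: IH => //; [lia | rewrite l1].
  - rewrite (leafE l1); apply: (C_step hs h1S asucc_nl htS (morS HD) (y := x0) (z := Ytree)) => //.
    + by rewrite l0.
    + by rewrite tsucc_Y ?l0.
    + by apply: IH => //; [lia | rewrite l0].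
    + exact: CY.
  - apply: (C_step hs h1P aprec_nl htP (morP HD) (y := Node [:: x0; leaf]) (z := x1)) => //.
    + by rewrite validE /= v0.
    + by rewrite l1.
    + by rewrite tprec_2 ?l1.
    + have h := tsize_nl (negbT l1); apply: IH => //; last by rewrite validE /= v0.
      by rewrite tsizeE /=; lia.
    + by apply: IH => //; [lia | rewrite l1].
move: hsz hv; rewrite (lastI r0 rs); move: (belast r0 rs) (last r0 rs) => s z.
rewrite /= all_rcons => hsz /andP[v0 /andP[v1 /andP[vz vs]]].
rewrite map_rcons sumn_rcons in hsz.
have pz := tsize_pos z; have p0 := tsize_pos x0; have p1 := tsize_pos x1.
apply: (C_step hs h1D (fun b d _ => adot_nl b d) htD (morD HD) (y := Node [:: x0, x1 & s]) (z := Node [:: leaf; z])) => //.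
- by rewrite validE /= v0 v1 vs.
- by rewrite validE /= vz.
- by rewrite tdot_k.
- by apply: IH => //; [rewrite tsizeE /=; lia | rewrite validE /= v0 v1 vs].
- by apply: IH => //; [rewrite tsizeE /=; lia | rewrite validE /= vz].
Qed.


Definition F0 {K : fieldType} (F : tree * tree -> K) (u : tree * tree) : K :=
  if is_leaf u.1 || is_leaf u.2 then 0 else F u.

Lemma ev_lone {K : fieldType} (F : tree * tree -> K) v :
  ev F (lone v) = ev (fun a => F (leaf, a)) v.
Proof. exact: (ev_map F (fun x => (leaf, x))). Qed.
Lemma ev_rone {K : fieldType} (F : tree * tree -> K) v :
  ev F (rone v) = ev (fun a => F (a, leaf)) v.
Proof. exact: (ev_map F (fun x => (x, leaf))). Qed.

Lemma evDt {K : fieldType} (D : tree -> lin K (tree * tree)) F t :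
  ev F (Dtilde D t) = ev (fun a => ev F (D a) - F (leaf, a) - F (a, leaf)) t.
Proof. by rewrite /Dtilde !ev_lsub ev_Dext ev_lone ev_rone !ev_sub. Qed.

Lemma good {K : fieldType} (D : tree -> lin K (tree * tree)) : is_Delta D ->
  forall t, inAplus t -> forall F, ev F (Dtilde D t) = ev (F0 F) (Dtilde D t).
Proof.
move=> HD t ht F; rewrite !evDt.
apply: (ev_all (P := fun x => valid x && ~~ is_leaf x) ht) => a /andP[va la].
have [C1 C2] := C_all HD (ltnSn (Defs.tsize a)) va la.
have hs : Hsupp D by case: HD.
rewrite /F0 /= orbT !subr0.
rewrite (ev_supp (G := fun u => F0 F u + PL (fun b => F (leaf, b)) u + PR (fun b => F (b, leaf)) u)).
  by rewrite !ev_add C1 C2 /F0; ring.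
move=> [x y] /(supp_nl hs va la) /= hxy.
rewrite /F0 /PL /PR /=.
case lx: (is_leaf x); case ly: (is_leaf y); rewrite ?lx ?ly //= in hxy *.
- by rewrite (leafE lx) !addr0 add0r.
- by rewrite (leafE ly) !add0r.
- by rewrite !addr0.
Qed.

Lemma bilin_catl {K : fieldType} {A B C : Type} (f : A -> B -> lin K C) v1 v2 w G :
  ev G (bilin f (v1 ++ v2) w) = ev G (bilin f v1 w) + ev G (bilin f v2 w).
Proof. by rewrite !ev_bilin ev_cat. Qed.
Lemma bilin_catr {K : fieldType} {A B C : Type} (f : A -> B -> lin K C) v w1 w2 G :
  ev G (bilin f v (w1 ++ w2)) = ev G (bilin f v w1) + ev G (bilin f v w2).
Proof. by rewrite !ev_bilin -ev_add; apply: ev_ext => a; rewrite ev_cat. Qed.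

Lemma evDtE {K : fieldType} (D : tree -> lin K (tree * tree)) v G :
  ev G (Dtilde D v) = ev G (Dext D v) - ev G (lone v) - ev G (rone v).
Proof. by rewrite /Dtilde !ev_lsub. Qed.

Lemma Dext_split {K : fieldType} (D : tree -> lin K (tree * tree)) t F :
  ev F (Dext D t) = ev F (lone t ++ rone t ++ Dtilde D t).
Proof. rewrite (ev_cat F (lone t)) (ev_cat F (rone t)) evDtE; ring. Qed.



Lemma expand {K : fieldType} (D : tree -> lin K (tree * tree)) (op top : tree -> tree -> lin K tree)
  (hmor : forall v w, inAplus v -> inAplus w ->
     veq (Dext D (bilin top v w)) (bilin (tens_op op) (Dext D v) (Dext D w)))
  (h1 : forall b d, ~~ is_leaf b -> ~~ is_leaf d -> op b d = top b d)
  t s (ht : inAplus t) (hs : inAplus s) G :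
  ev G (Dtilde D (bilin top t s)) =
  ev G (bilin (tens_op op) (Dtilde D t) (Dtilde D s)) + ev G (bilin (tens_op op) (lone t) (Dtilde D s))
  + ev G (bilin (tens_op op) (Dtilde D t) (lone s)) + ev G (bilin (tens_op op) (lone t) (rone s))
  + ev G (bilin (tens_op op) (rone t) (lone s)) + ev G (bilin (tens_op op) (rone t) (Dtilde D s))
  + ev G (bilin (tens_op op) (Dtilde D t) (rone s)).
Proof.
have LL : ev G (bilin (tens_op op) (lone t) (lone s)) = ev G (lone (bilin top t s)).
  rewrite ev_bilin ev_lone ev_lone ev_bilin.
  apply: (ev_all (P := fun x => valid x && ~~ is_leaf x) ht) => a /andP[_ la].
  rewrite ev_lone; apply: (ev_all (P := fun x => valid x && ~~ is_leaf x) hs) => b /andP[_ lb].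
  by rewrite /tens_op /= (negbTE la) ev_tens /tstar /= ev_cons ev_nil mul1r addr0 h1.
have RR : ev G (bilin (tens_op op) (rone t) (rone s)) = ev G (rone (bilin top t s)).
  rewrite ev_bilin ev_rone ev_rone ev_bilin.
  apply: (ev_all (P := fun x => valid x && ~~ is_leaf x) ht) => a /andP[_ la].
  rewrite ev_rone; apply: (ev_all (P := fun x => valid x && ~~ is_leaf x) hs) => b /andP[_ lb].
  by rewrite /tens_op /= (ev_map _ (fun x => (x, leaf))) h1.
rewrite evDtE (veq_ev _ (hmor _ _ ht hs)) (ev_bilin_ext _ (Dext_split D t) (Dext_split D s)).
rewrite !bilin_catl !bilin_catr LL RR; ring.
Qed.

Lemma tens_nil {K : fieldType} (v : lin K tree) : tens v [::] = [::].
Proof. by elim: v. Qed.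

Definition PA (x : tree) := valid x && ~~ is_leaf x.

Lemma ev_z {K : fieldType} {T : Type} (P : pred T) (F : T -> K) v :
  all (fun p => P p.2) v -> (forall x, P x -> F x = 0) -> ev F v = 0.
Proof. by move=> h E; rewrite (ev_all h E) ev0. Qed.

Lemma LR0 {K : fieldType} (op : tree -> tree -> lin K tree)
  (hz : forall a, ~~ is_leaf a -> op a leaf = [::]) t s (ht : inAplus t) (hs : inAplus s) G :
  ev G (bilin (tens_op op) (lone t) (rone s)) = 0.
Proof.
rewrite ev_bilin ev_lone; apply: (ev_z (P := PA) ht) => a /andP[_ la].
rewrite ev_rone; apply: (ev_z (P := PA) hs) => b /andP[_ lb].
by rewrite /tens_op /= (negbTE la) hz // tens_nil ev_nil.
Qed.

Lemma RL0 {K : fieldType} (op : tree -> tree -> lin K tree)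
  (hz : forall b, ~~ is_leaf b -> op leaf b = [::]) t s (ht : inAplus t) (hs : inAplus s) G :
  ev G (bilin (tens_op op) (rone t) (lone s)) = 0.
Proof.
rewrite ev_bilin ev_rone; apply: (ev_z (P := PA) ht) => a /andP[_ la].
rewrite ev_lone; apply: (ev_z (P := PA) hs) => b /andP[_ lb].
by rewrite /tens_op /= (negbTE lb) hz // tens_nil ev_nil.
Qed.

Lemma RS0 {K : fieldType} (D : tree -> lin K (tree * tree)) (HD : is_Delta D) (op : tree -> tree -> lin K tree)
  (hz : forall b, ~~ is_leaf b -> op leaf b = [::]) t s (ht : inAplus t) (hs : inAplus s) G :
  ev G (bilin (tens_op op) (rone t) (Dtilde D s)) = 0.
Proof.
rewrite ev_bilin ev_rone; apply: (ev_z (P := PA) ht) => a /andP[_ la].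
rewrite (good HD hs) (ev_ext (G := fun _ => 0)) ?ev0 // => -[c d]; rewrite /F0 /=.
case lc: (is_leaf c); case ld: (is_leaf d) => //=.
by rewrite /tens_op /= ld hz ?ld // tens_nil ev_nil.
Qed.

Lemma TR0 {K : fieldType} (D : tree -> lin K (tree * tree)) (HD : is_Delta D) (op : tree -> tree -> lin K tree)
  (hz : forall a, ~~ is_leaf a -> op a leaf = [::]) t s (ht : inAplus t) (hs : inAplus s) G :
  ev G (bilin (tens_op op) (Dtilde D t) (rone s)) = 0.
Proof.
rewrite ev_bilin (good HD ht) (ev_ext (G := fun _ => 0)) ?ev0 // => -[a c]; rewrite /F0 /=.
case la: (is_leaf a); case lc: (is_leaf c) => //=.
rewrite ev_rone; apply: (ev_z (P := PA) hs) => b /andP[_ lb].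
by rewrite /tens_op /= lc hz ?lc // tens_nil ev_nil.
Qed.

Lemma LRp {K : fieldType} t s (ht : inAplus t) (hs : inAplus s) (G : tree * tree -> K) :
  ev G (bilin (tens_op (aprec K)) (lone t) (rone s)) = ev G (tens s t).
Proof.
rewrite ev_bilin ev_lone ev_tens [RHS]ev_exch.
apply: (ev_all (P := PA) ht) => a /andP[_ la].
rewrite ev_rone; apply: (ev_all (P := PA) hs) => b /andP[_ lb].
by rewrite /tens_op /= (negbTE la) /aprec /tstar /= (negbTE la) ev_tens !ev_cons !ev_nil !mul1r !addr0.
Qed.

Lemma RLs {K : fieldType} t s (ht : inAplus t) (hs : inAplus s) (G : tree * tree -> K) :
  ev G (bilin (tens_op (asucc K)) (rone t) (lone s)) = ev G (tens t s).
Proof.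
rewrite ev_bilin ev_rone ev_tens.
apply: (ev_all (P := PA) ht) => a /andP[_ la].
rewrite ev_lone; apply: (ev_all (P := PA) hs) => b /andP[_ lb].
by rewrite /tens_op /= (negbTE lb) /asucc /tstar /= (negbTE la) (negbTE lb) ev_tens !ev_cons !ev_nil !mul1r !addr0.
Qed.

Lemma RSs {K : fieldType} (D : tree -> lin K (tree * tree)) (HD : is_Delta D) t s
  (ht : inAplus t) (hs : inAplus s) G :
  ev G (bilin (tens_op (asucc K)) (rone t) (Dtilde D s)) = ev G (TTstar (rone t) (Dtilde D s)).
Proof.
rewrite /TTstar !ev_bilin !ev_rone; apply: ev_ext => a.
rewrite (good HD hs) [RHS](good HD hs); apply: ev_ext => -[c d]; rewrite /F0 /=.
case lc: (is_leaf c); case ld: (is_leaf d) => //=.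
by rewrite /tens_op /= ld /asucc /tstar /= ld.
Qed.

Lemma TRp {K : fieldType} (D : tree -> lin K (tree * tree)) (HD : is_Delta D) t s
  (ht : inAplus t) (hs : inAplus s) G :
  ev G (bilin (tens_op (aprec K)) (Dtilde D t) (rone s)) = ev G (TTstar (Dtilde D t) (rone s)).
Proof.
rewrite /TTstar !ev_bilin (good HD ht) [RHS](good HD ht); apply: ev_ext => -[a c]; rewrite /F0 /=.
case la: (is_leaf a); case lc: (is_leaf c) => //=.
rewrite !ev_rone; apply: ev_ext => b.
by rewrite /tens_op /= lc /aprec /tstar /= lc.
Qed.

Unset Implicit Arguments.
Theorem mainTheorem5 (K : fieldType) (D : tree -> lin K (tree * tree)) :
  is_Delta D ->
  forall t s : lin K tree, inAplus t -> inAplus s ->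
  [/\ veq (Dtilde D (vdot t s))
          (TTdot (Dtilde D t) (Dtilde D s) ++ TTdot (lone t) (Dtilde D s)
           ++ TTdot (Dtilde D t) (lone s)),
      veq (Dtilde D (vprec t s))
          (tens s t ++ TTprec (lone t) (Dtilde D s) ++ TTprec (Dtilde D t) (lone s)
           ++ TTstar (Dtilde D t) (rone s) ++ TTprec (Dtilde D t) (Dtilde D s)) &
      veq (Dtilde D (vsucc t s))
          (tens t s ++ TTsucc (lone t) (Dtilde D s) ++ TTstar (rone t) (Dtilde D s)
           ++ TTsucc (Dtilde D t) (lone s) ++ TTsucc (Dtilde D t) (Dtilde D s))].
Proof.
move=> HD t s ht hs; split; apply: ev_veq => G.
- rewrite /vdot (expand (morD HD) h1D ht hs G) /TTdot !ev_cat.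
  rewrite (LR0 _ ht hs) ?(RL0 _ ht hs) ?(RS0 HD _ ht hs) ?(TR0 HD _ ht hs);
    try by move=> a la; rewrite /adot ?orbT.
  ring.
- rewrite /vprec (expand (morP HD) h1P ht hs G) /TTprec !ev_cat.
  rewrite (LRp ht hs) (TRp HD ht hs) (RL0 _ ht hs) ?(RS0 HD _ ht hs);
    try by move=> b lb; rewrite /aprec (negbTE lb).
  ring.
- rewrite /vsucc (expand (morS HD) h1S ht hs G) /TTsucc !ev_cat.
  rewrite (RLs ht hs) (RSs HD ht hs) (LR0 _ ht hs) ?(TR0 HD _ ht hs);
    try by move=> a la; rewrite /asucc (negbTE la).
  ring.
Qed.
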